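(* Let $h(x)$ be a monic irreducible polynomial over $GF(q)$ of degree $m>1$ and order $n$ with $n\ne q^m-1$, and let $J\subseteq A_n$ be the minimal ideal (irreducible cyclic code) with parity-check polynomial $h(x)$. Let $R=(q^m-1)/(q-1)$ and $$d=\gcd(q-1,n),\qquad r=n/d.$$ Then every cycle of $J$ (of a nonzero element) is contained in exactly $r$ proportionality classes, each of which contains exactly $d$ distinct vectors of the cycle; i.e. for every nonzero $z\in J$ one has $d_z=d$ and $r_z=r$. Moreover $1\le r\le R$, $r\mid R$, and $1\le d\le q-1$.
   Context: Let $q>2$ be a prime power. The order $\mathrm{ord}(f)$ of a polynomial $f$ with $f(0)\ne0$ is the least $e\ge1$ with $f\mid x^e-1$; $\gcd(n,q)=1$ holds automatically. $A_n=GF(q)[x]/(x^n-1)$; $J$ is the ideal generated by $(x^n-1)/h(x)$. For nonzero $z\in A_n$: $P_z=\{\alpha z:\alpha\in GF(q)^*\}$ is its proportionality class; $\{z\}=\{x^iz:i\ge0\}$ is its cycle; its period $n_z$ is the least $e\ge1$ with $x^ez=z$ (every nonzero element of $J$ has period $n$); $r_z$ is the least positive integer such that $x^{r_z}z=\alpha z$ for some $\alpha\in GF(q)^*$, and $d_z=n_z/r_z$. *)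

(* Defs.v *)
From HB Require Import structures.
From mathcomp Require Import all_boot all_order all_algebra all_field.
Set Implicit Arguments. Unset Strict Implicit. Unset Printing Implicit Defensive.
Import GRing.Theory.
Local Open Scope ring_scope.

Definition is_least (P : nat -> Prop) (k : nat) : Prop :=
  (0 < k)%N /\ P k /\ forall e : nat, (0 < e)%N -> (e < k)%N -> ~ P e.

Definition poly_order (F : fieldType) (f : {poly F}) (e : nat) : Prop :=
  is_least (fun k => f %| 'X^k - 1) e.

(* Elements of A_n = F[x]/(x^n - 1) are represented by polynomials;
   equality in A_n is congruence modulo x^n - 1. *)
Definition eqA (F : fieldType) (n : nat) (a b : {poly F}) : Prop :=
  ('X^n - 1) %| (a - b).

Definition nonzeroA (F : fieldType) (n : nat) (z : {poly F}) : Prop :=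
  ~ eqA n z 0.

Definition inJ (F : fieldType) (n : nat) (h z : {poly F}) : Prop :=
  exists a : {poly F}, eqA n z (a * (('X^n - 1) %/ h)).

Definition periodA (F : fieldType) (n : nat) (z : {poly F}) (e : nat) : Prop :=
  is_least (fun k => eqA n ('X^k * z) z) e.

Definition propA (F : fieldType) (n : nat) (z : {poly F}) (e : nat) : Prop :=
  is_least (fun k => exists2 alpha : F, alpha != 0 & eqA n ('X^k * z) (alpha *: z)) e.

(* Main.v *)
Require Import Defs.
From HB Require Import structures.
From mathcomp Require Import all_boot all_order all_algebra all_field.
Set Implicit Arguments. Unset Strict Implicit. Unset Printing Implicit Defensive.
Import GRing.Theory.
Local Open Scope ring_scope.

Section K.
Variable F : finFieldType.
Variable h : {poly F}.
Hypothesis hI : monic_irreducible_poly h.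
Local Notation K := {poly %/ h with hI}.
Definition phi (p : {poly F}) : K := in_qpoly h p.

Lemma phi_eq0 p : (phi p == 0) = (h %| p).
Proof.
have [hirr hM] := hI.
have sh : (1 < size h)%N by case: hirr.
apply/eqP/idP => [/val_eqP /= | hDp].
  by rewrite -Pdiv.IdomainMonic.modpE mk_monicE.
by apply/val_eqP; rewrite /= -Pdiv.IdomainMonic.modpE mk_monicE.
Qed.

Lemma phiM p q : phi (p * q) = phi p * phi q.
Proof. exact: in_qpolyM. Qed.
Lemma phiB p q : phi (p - q) = phi p - phi q.
Proof. exact: (raddfB (in_qpoly h)). Qed.
Lemma phi1 : phi 1 = 1.
Proof. exact: in_qpoly1. Qed.
Lemma phiX k p : phi (p ^+ k) = phi p ^+ k.
Proof. elim: k => [|k IH]; first by rewrite !expr0 phi1. by rewrite !exprS phiM IH. Qed.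

Lemma cardK : #|K| = (#|F| ^ (size h).-1)%N.
Proof. exact: card_qfpoly. Qed.

Lemma fK (x : K) : x ^+ #|K| = x.
Proof. exact: expf_card. Qed.
Lemma fixedF w : phi w ^+ #|F| = phi w -> exists a : F, phi w = phi a%:P.
Proof.
move=> Hw.
have E := congr1 (fun P => phi (P \Po w)) (finField_genPoly F).
move: E => /=.
rewrite comp_polyB comp_Xn_poly comp_polyX phiB phiX Hw subrr.
rewrite (big_morph (fun p => p \Po w) (fun p q => comp_polyM p q w) (comp_polyC 1 w)).
rewrite (big_morph phi phiM phi1) => /esym/eqP/prodf_eq0 [a _].
rewrite comp_polyB comp_polyX comp_polyC phiB subr_eq0 => /eqP ->.
by exists a.
Qed.
End K.

Section Main.
Variable F : finFieldType.
Variable h : {poly F}.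
Hypothesis hI : monic_irreducible_poly h.
Variable n : nat.
Hypothesis hn : poly_order h n.
Local Notation K := {poly %/ h with hI}.
Local Notation phi := (phi hI).
Let x : K := phi 'X.

Lemma xeq e : (x ^+ e == 1) = (h %| 'X^e - 1).
Proof. by rewrite -phi_eq0 phiB phiX phi1 subr_eq0. Qed.

Lemma xceq e a : (x ^+ e == phi a%:P) = (h %| 'X^e - a%:P).
Proof. by rewrite -phi_eq0 phiB phiX subr_eq0. Qed.

Lemma n_gt0 : (0 < n)%N.
Proof. by case: hn. Qed.

Lemma xn : x ^+ n = 1.
Proof. by apply/eqP; rewrite xeq; case: hn => _ []. Qed.

Lemma xdvd e : x ^+ e = 1 -> (n %| e)%N.
Proof.
move=> He; have Hm := expr_mod e xn; rewrite He in Hm.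
case: (ltnP 0 (e %% n)) => Hp; last by rewrite /dvdn -leqn0.
have [_ [_ Hmin]] := hn.
by case: (Hmin _ Hp (ltn_pmod e n_gt0)); rewrite -xeq Hm.
Qed.

Lemma x_neq0 : x != 0.
Proof.
apply/eqP => H0; have := xn; rewrite H0 expr0n.
by case: n n_gt0 => // k _ /eqP; rewrite eq_sym oner_eq0.
Qed.

Lemma n_dvd_N : (n %| #|F| ^ (size h).-1 - 1)%N.
Proof.
apply: xdvd; have H := fK x; rewrite cardK in H.
have Hp : (0 < #|F| ^ (size h).-1)%N by by rewrite expn_gt0; apply/orP; left; apply/card_gt0P; exists 0.
apply: (mulIf x_neq0); by rewrite mul1r -exprSr subn1 prednK.
Qed.

Hypothesis Hq : (1 < #|F|)%N.
Let q := #|F|.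
Let d := gcdn (q - 1) n.
Let r := (n %/ d)%N.

Lemma q1_gt0 : (0 < q - 1)%N.
Proof. by rewrite subn_gt0. Qed.
Lemma d_gt0 : (0 < d)%N.
Proof. by rewrite gcdn_gt0 q1_gt0. Qed.
Lemma d_dvd_n : (d %| n)%N.
Proof. exact: dvdn_gcdr. Qed.
Lemma d_dvd_q1 : (d %| q - 1)%N.
Proof. exact: dvdn_gcdl. Qed.

Lemma alpha_pow (a : F) : a != 0 -> a ^+ (q - 1) = 1.
Proof.
move=> a0; have H := expf_card a; rewrite -/q in H.
apply: (mulfI a0); rewrite mulr1 -exprS subn1 prednK //.
exact: ltnW.
Qed.

Lemma phiC_exp (a : F) k : phi a%:P ^+ k = phi (a ^+ k)%:P.
Proof. by rewrite -phiX rmorphXn. Qed.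

Lemma Qfwd e a : a != 0 -> x ^+ e = phi a%:P -> (r %| e)%N.
Proof.
move=> a0 He.
have H1 : x ^+ (e * (q - 1)) = 1.
  by rewrite exprM He phiC_exp alpha_pow // phi1.
have H2 := xdvd H1.
rewrite /r dvdn_divLR ?d_gt0 ?d_dvd_n // /d muln_gcdr dvdn_gcd.
by rewrite H2 dvdn_mull.
Qed.

Lemma phi0 : phi 0 = 0.
Proof. exact: in_qpoly0. Qed.

Lemma Qr : exists2 a : F, a != 0 & x ^+ r = phi a%:P.
Proof.
have Hy : (x ^+ r) ^+ (q - 1) = 1.
  rewrite -exprM /r divn_mulAC ?d_dvd_n // -muln_divA ?d_dvd_q1 //.
  by rewrite exprM xn expr1n.
have Hy2 : phi ('X^r) ^+ #|F| = phi ('X^r).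
  rewrite phiX -/x -(subnK (ltnW Hq)) addn1 exprS.
  by rewrite Hy mulr1.
have [a Ha] := fixedF Hy2.
exists a; last by rewrite -Ha phiX.
apply/eqP => a0; move: Hy; rewrite -phiX Ha a0 phi0 expr0n.
rewrite eqn0Ngt q1_gt0 /= => /eqP; by rewrite eq_sym oner_eq0.
Qed.

Lemma Qiff e : (exists2 a : F, a != 0 & x ^+ e = phi a%:P) <-> (r %| e)%N.
Proof.
split; first by case=> a a0; apply: Qfwd a0.
case/dvdnP => k ->; have [a a0 Ha] := Qr.
exists (a ^+ k); first by rewrite expf_neq0.
by rewrite mulnC exprM Ha phiC_exp.
Qed.

Section Z.
Variable z a : {poly F}.
Hypothesis hz : ('X^n - 1) %| z - a * (('X^n - 1) %/ h).
Hypothesis hnz : ~ (('X^n - 1) %| z - 0).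

Lemma hd : h %| 'X^n - 1.
Proof. by case: hn => _ []. Qed.

Lemma g_neq0 : ('X^n - 1) %/ h != 0.
Proof.
apply/eqP => g0; have := divpK hd; rewrite g0 mul0r => /esym/eqP.
by rewrite -size_poly_eq0 size_Xn_sub_1 // n_gt0.
Qed.

Lemma ha : ~~ (h %| a).
Proof.
apply/negP => Ha; apply: hnz; rewrite subr0.
rewrite -[z](subrK (a * (('X^n - 1) %/ h))) dvdp_addl //.
rewrite -[X in X %| _](divpK hd) mulrC.
by apply: dvdp_mul => //; apply: dvdpp.
Qed.

Lemma transl w : (('X^n - 1) %| w * z) = (h %| w).
Proof.
rewrite -[z](subrK (a * (('X^n - 1) %/ h))) mulrDr dvdp_addr; last first.
  by apply: dvdp_mull.
rewrite -[X in X %| _](divpK hd) mulrA [_ * h]mulrC dvdp_mul2r ?g_neq0 //.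
rewrite -!phi_eq0 phiM mulf_eq0.
by have := ha; rewrite -phi_eq0 => /negbTE ->; rewrite orbF.
Qed.

Lemma periodz : periodA n z n.
Proof.
have E k : eqA n ('X^k * z) z <-> h %| 'X^k - 1.
  by rewrite /eqA -{2}[z]mul1r -mulrBl transl.
have [H0 [H1 H2]] := hn.
split => //; split; first by apply/E.
by move=> e e0 en /E; apply: H2.
Qed.

Lemma propz : propA n z r.
Proof.
have E k : (exists2 al : F, al != 0 & eqA n ('X^k * z) (al *: z)) <-> (r %| k)%N.
  apply: (iff_trans _ (Qiff k)); split; case=> al al0 H; exists al => //.
    by apply/eqP; rewrite xceq -transl mulrBl mul_polyC.
  by rewrite /eqA -mul_polyC -mulrBl transl -xceq H.
have r0 : (0 < r)%N by rewrite divn_gt0 ?d_gt0 // dvdn_leq ?n_gt0 ?d_dvd_n.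
split => //; split; first by apply/E.
move=> e e0 er /E /(dvdn_leq e0); by rewrite leqNgt er.
Qed.

End Z.

End Main.

Theorem theorem2 (F : finFieldType) (h : {poly F}) (m n : nat) :
  (2 < #|F|)%N ->
  h \is monic -> irreducible_poly h -> size h = m.+1 -> (1 < m)%N ->
  poly_order h n -> n <> (#|F| ^ m - 1)%N ->
  let q := #|F| in
  let R := ((q ^ m - 1) %/ (q - 1))%N in
  let d := gcdn (q - 1) n in
  let r := (n %/ d)%N in
  (forall z : {poly F}, inJ n h z -> nonzeroA n z ->
     exists nz rz : nat, periodA n z nz /\ propA n z rz /\
        rz = r /\ (nz %/ rz)%N = d) /\
  [/\ (1 <= r)%N, (r <= R)%N, (r %| R)%N & (1 <= d <= q - 1)%N].
Proof.
move=> Hq2 hM hirr hsz hm1 hn _ q R d r.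
have hI : monic_irreducible_poly h := (hirr, hM).
have Hq : (1 < #|F|)%N by apply: ltnW.
rewrite {}/r {}/d {}/R {}/q.
have dn := @d_dvd_n F n.
have d0 := d_gt0 n Hq.
have n0 : (0 < n)%N by case: hn.
have r0 : (0 < n %/ gcdn (#|F| - 1) n)%N by rewrite divn_gt0 // dvdn_leq.
split.
  move=> z [a Ha] hnz; exists n, (n %/ gcdn (#|F| - 1) n)%N.
  split; first exact: (periodz hI hn Ha hnz).
  split; first exact: (propz hI hn Hq Ha hnz).
  split => //.
  by rewrite -{1}(divnK dn) mulKn.
have q10 : (0 < #|F| - 1)%N by rewrite subn_gt0.
have Nd : (n %| #|F| ^ m - 1)%N by have := n_dvd_N hI hn; rewrite hsz.
have qd : (#|F| - 1 %| #|F| ^ m - 1)%N.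
  rewrite -eqn_mod_dvd ?expn_gt0 ?(ltnW Hq) //.
  by rewrite -modnXm -{1}(subnK (ltnW Hq)) modnDl modnXm exp1n.
have N0 : (#|F| - 1 <= #|F| ^ m - 1)%N.
  apply: leq_sub2r; rewrite -{1}(expn1 #|F|).
  by apply: leq_pexp2l; [apply: ltnW | apply: ltnW].
have rR : (n %/ gcdn (#|F| - 1) n %| (#|F| ^ m - 1) %/ (#|F| - 1))%N.
  rewrite dvdn_divRL //.
  suff -> : (n %/ gcdn (#|F| - 1) n * (#|F| - 1) = lcmn n (#|F| - 1))%N.
    by rewrite dvdn_lcm Nd qd.
  apply/eqP; rewrite -(eqn_pmul2r d0) -{3}(gcdnC) muln_lcm_gcd.
  by rewrite mulnAC divnK.
have R0 : (0 < (#|F| ^ m - 1) %/ (#|F| - 1))%N by rewrite divn_gt0.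
split => //.
- exact: dvdn_leq.
- by rewrite d0 dvdn_leq // dvdn_gcdl.
Qed.
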